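(* Let $L>0$, $\mu\in(-\infty,0]$, $\kappa:=\mu/L$, and $f\in\mathcal{F}_{\mu,L}(\mathbb{R}^d)$. Define $\bar h(\kappa):=\frac{3}{1+\kappa+\sqrt{1-\kappa+\kappa^2}}\in[\tfrac32,2)$. Let $x_0\in\mathbb{R}^d$, $h_0,\dots,h_{N-1}\in(0,\bar h(\kappa)]$, and $x_{i+1}=x_i-\frac{h_i}{L}\nabla f(x_i)$ for $i=0,\dots,N-1$. Define $$p(h,\kappa)=\begin{cases}2h-h^2\frac{-\kappa}{1-\kappa}, & h\in(0,1],\\[2pt] \frac{h(2-h)(2-\kappa h)}{2-(1+\kappa)h}, & h\in[1,\bar h(\kappa)].\end{cases}$$ Then $$\min_{0\le i\le N}\|\nabla f(x_i)\|^2\le\frac{2L\,[f(x_0)-f(x_N)]}{\sum_{i=0}^{N-1}p(h_i,\kappa)}.$$ Additionally, if $f$ is bounded from below and $f_*:=\inf_{x}f(x)$, then $$\min_{0\le i\le N}\|\nabla f(x_i)\|^2\le\frac{2L\,[f(x_0)-f_*]}{1+\sum_{i=0}^{N-1}p(h_i,\kappa)}.$$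
   Context: For $L>0$ and $\mu\le L$, $\mathcal{F}_{\mu,L}(\mathbb{R}^d)$ denotes the class of differentiable functions $f:\mathbb{R}^d\to\mathbb{R}$ such that both $\frac L2\|\cdot\|^2-f$ and $f-\frac{\mu}{2}\|\cdot\|^2$ are convex. *)

(* Defs.v *)
From HB Require Import structures.
From mathcomp Require Import all_boot all_order all_algebra.
From mathcomp Require Import all_classical all_reals all_analysis.
Set Implicit Arguments. Unset Strict Implicit. Unset Printing Implicit Defensive.
Import Order.TTheory GRing.Theory Num.Theory.
Import numFieldNormedType.Exports.
Local Open Scope ring_scope.

Definition dotv (R : realType) (d : nat) (u v : 'rV[R]_d) : R :=
  \sum_(i < d) u 0 i * v 0 i.
Definition sqnorm (R : realType) (d : nat) (u : 'rV[R]_d) : R := dotv u u.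

Definition grad (R : realType) (d : nat) (f : 'rV[R]_d -> R) (x : 'rV[R]_d)
  : 'rV[R]_d := \row_(i < d) ('d f x (delta_mx 0 i : 'rV[R]_d)).

Definition convex_fun (R : realType) (d : nat) (g : 'rV[R]_d -> R) : Prop :=
  forall (x y : 'rV[R]_d) (t : R), 0 <= t <= 1 ->
    g (t *: x + (1 - t) *: y) <= t * g x + (1 - t) * g y.

Definition F_class (R : realType) (d : nat) (mu L : R) (f : 'rV[R]_d -> R)
  : Prop :=
  0 < L /\ mu <= L /\ (forall x, differentiable f x) /\
  convex_fun (fun x => L / 2 * sqnorm x - f x) /\
  convex_fun (fun x => f x - mu / 2 * sqnorm x).

Definition hbar (R : realType) (k : R) : R :=
  3 / (1 + k + Num.sqrt (1 - k + k ^+ 2)).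

Definition pfun (R : realType) (h k : R) : R :=
  if h <= 1 then 2 * h - h ^+ 2 * ((- k) / (1 - k))
  else h * (2 - h) * (2 - k * h) / (2 - (1 + k) * h).

(* Main.v *)
Require Import Defs.
From HB Require Import structures.
From mathcomp Require Import all_boot all_order all_algebra.
From mathcomp Require Import all_classical all_reals all_analysis.
From mathcomp Require Import ring lra.
Import Order.TTheory GRing.Theory Num.Theory.
Import numFieldNormedType.Exports.
Local Open Scope ring_scope.
Local Open Scope classical_set_scope.

Section Dot.
Context {R : realType} {d : nat}.
Implicit Types (u v w : 'rV[R]_d).

Lemma dotvC u v : dotv u v = dotv v u.
Proof. by rewrite /dotv; apply: eq_bigr => i _; rewrite mulrC. Qed.

Lemma dotvDl u w v : dotv (u + w) v = dotv u v + dotv w v.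
Proof. by rewrite /dotv -big_split; apply: eq_bigr => i _; rewrite mxE mulrDl. Qed.

Lemma dotvBl u w v : dotv (u - w) v = dotv u v - dotv w v.
Proof. by rewrite /dotv -sumrB; apply: eq_bigr => i _; rewrite !mxE mulrBl. Qed.

Lemma dotvZl (a : R) u v : dotv (a *: u) v = a * dotv u v.
Proof. by rewrite /dotv mulr_sumr; apply: eq_bigr => i _; rewrite mxE mulrA. Qed.

Lemma dotvDr u w v : dotv v (u + w) = dotv v u + dotv v w.
Proof. by rewrite dotvC dotvDl !(dotvC v). Qed.

Lemma dotvBr u w v : dotv v (u - w) = dotv v u - dotv v w.
Proof. by rewrite dotvC dotvBl !(dotvC v). Qed.

Lemma dotvZr (a : R) u v : dotv v (a *: u) = a * dotv v u.
Proof. by rewrite dotvC dotvZl dotvC. Qed.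

Lemma sqnorm_ge0 u : 0 <= sqnorm u.
Proof. by rewrite /sqnorm /dotv; apply: sumr_ge0 => i _; rewrite -expr2 sqr_ge0. Qed.

Lemma dot_comb (g g' : 'rV[R]_d) (a1 b1 a2 b2 : R) :
  dotv (a1 *: g + b1 *: g') (a2 *: g + b2 *: g') =
  a1 * a2 * dotv g g + (a1 * b2 + b1 * a2) * dotv g g' + b1 * b2 * dotv g' g'.
Proof.
rewrite !dotvDl !dotvDr !dotvZl !dotvZr (dotvC g' g).
rewrite !mulrA; ring.
Qed.

End Dot.

Lemma d_grad (R : realType) (d : nat) (f : 'rV[R]_d -> R) (y v : 'rV[R]_d) :
  'd f y v = dotv (grad f y) v.
Proof.
rewrite {1}(row_sum_delta v) linear_sum /dotv; apply: eq_bigr => i _.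
by rewrite linearZ /= mxE mulrC.
Qed.

Lemma dd_bound (R : realType) (d : nat) (f : 'rV[R]_d -> R) (y v : 'rV[R]_d) (s a b : R) :
  differentiable f y ->
  (forall t, 0 < t < 1 -> s * (t^-1 * (f (y + t *: v) - f y)) <= a + b * t) ->
  s * 'd f y v <= a.
Proof.
move=> df H.
have dv : derivable f y v by apply: diff_derivable.
have Hc : (fun h : R => h^-1 *: ((f \o shift y) (h *: v) - f y)) @ 0^' --> 'D_v f y.
  exact: dv.
rewrite -deriveE //.
have Hr0 := cvg_dnbhs_at_right Hc.
have Hr : (fun h : R => s * (h^-1 *: ((f \o shift y) (h *: v) - f y))) @ 0^'+ --> s * 'D_v f y.
  by apply: cvgMr.
have Hid : (fun h : R => b * h) @ 0^'+ --> b * 0.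
  apply: cvgMr.
  apply: cvg_at_right_filter.
  exact: cvg_id.
have Hs := cvgB Hr Hid.
rewrite mulr0 subr0 in Hs.
have Hs2 : ((fun x : R => s * (x^-1 *: ((f \o shift y) (x *: v) - f y))) - [eta  *%R b]) x @[x --> 0^'+] --> s * 'D_v f y by apply: Hs; exact: filter_class.
apply: (cvgr_to_le Hs2).
near=> t.
have t0 : 0 < t by near: t; exact: nbhs_right_gt.
have t1 : t < 1.
  by near: t; apply: nbhs_right_lt; exact: ltr01.
have := H t; rewrite t0 t1 /= => /(_ isT).
move=> Ht; change (s * (t^-1 *: (f (t *: v + y) - f y)) - b * t <= a); rewrite [t *: v + y]addrC; move: Ht; rewrite -[t^-1 *: _]/(t^-1 * _); lra.
Unshelve. all: by end_near.
Qed.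

Lemma sq_add (R : realType) (d : nat) (y v : 'rV[R]_d) (t : R) :
  sqnorm (y + t *: v) = sqnorm y + 2 * t * dotv y v + t ^+ 2 * sqnorm v.
Proof.
rewrite /sqnorm !dotvDl !dotvDr !dotvZl !dotvZr (dotvC v y); ring.
Qed.

Lemma FO (R : realType) (d : nat) (f : 'rV[R]_d -> R) (s c : R) (y z : 'rV[R]_d) :
  differentiable f y ->
  (forall x w (t : R), 0 <= t <= 1 ->
     s * f (t *: x + (1 - t) *: w) - c / 2 * sqnorm (t *: x + (1 - t) *: w)
     <= t * (s * f x - c / 2 * sqnorm x) + (1 - t) * (s * f w - c / 2 * sqnorm w)) ->
  c / 2 * sqnorm (z - y) <= s * (f z - f y - dotv (grad f y) (z - y)).
Proof.
move=> df Hc.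
set v := z - y.
have zE : z = y + 1 *: v by rewrite scale1r /v addrC subrK.
have Hsz := sq_add R d y v 1.
rewrite -zE in Hsz.
have H := @dd_bound R d f y v s (s * (f z - f y) - c / 2 * (sqnorm z - sqnorm y) + c * dotv y v)
   (c / 2 * sqnorm v) df.
have {H} H : s * 'd f y v <= s * (f z - f y) - c / 2 * (sqnorm z - sqnorm y) + c * dotv y v.
  apply: H => t /andP [t0 t1].
  have := Hc z y t; rewrite (ltW t0) (ltW t1) => /(_ isT).
  have -> : t *: z + (1 - t) *: y = y + t *: v.
    by apply/rowP => j; rewrite /v !mxE; ring.
  rewrite sq_add => Hct.
  rewrite -(ler_pM2l t0).
  have -> : t * (s * (t^-1 * (f (y + t *: v) - f y))) = s * (f (y + t *: v) - f y).
    by field; rewrite gt_eqF.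
  move: Hct Hsz; rewrite expr1n !mul1r => Hct Hsz.
  rewrite Hsz; rewrite Hsz in Hct; lra.
rewrite d_grad in H.
move: H Hsz; rewrite expr1n !mul1r => H Hsz.
rewrite Hsz in H; lra.
Qed.
Lemma hbar_facts (R : realType) (k h : R) : k <= 0 -> 0 < h <= hbar k ->
  [/\ h < 2, 1 < h -> 0 < 2 - h - k * h & 0 <= 3 - 2 * (1 + k) * h + k * h ^+ 2].
Proof.
move=> k0 /andP [h0 hb].
set S := Num.sqrt (1 - k + k ^+ 2).
have S2 : S ^+ 2 = 1 - k + k ^+ 2 by rewrite sqr_sqrtr //; nra.
have S0 : 0 <= S by exact: sqrtr_ge0.
have S1 : 1 <= S.
  have : 1 <= S ^+ 2 by rewrite S2; nra.
  by rewrite -{1}(expr1n _ 2) ler_pXn2r // ?nnegrE.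
have S12 : 1 / 2 - k < S.
  have hlt : (1 / 2 - k) ^+ 2 < S ^+ 2 by rewrite S2; nra.
  rewrite -(ltr_pXn2r (n:=2)) //; rewrite nnegrE //; lra.
have D0 : 3 / 2 < 1 + k + S by lra.
have hD : h * (1 + k + S) <= 3.
  move: hb; rewrite /hbar -/S => hb.
  by rewrite -ler_pdivlMr ?mulr1; [| lra].
split.
- nra.
- move=> h1; nra.
- have E1 : (3 - h * (1 + k + S)) * (1 + (S - 1 - k) * h / 3) = 3 - 2 * (1 + k) * h - h ^+ 2 * ((S ^+ 2 - (1 + k) ^+ 2) / 3).
    by field.
  have E2 : 3 - 2 * (1 + k) * h + k * h ^+ 2 = (3 - h * (1 + k + S)) * (1 + (S - 1 - k) * h / 3).
    by rewrite E1 S2; field.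
  rewrite E2; apply: mulr_ge0; first lra.
  have : 0 <= (S - 1 - k) * h by apply: mulr_ge0; lra.
  lra.
Qed.

Lemma scalar_step (R : realType) (L k h A B C F : R) :
  0 < L -> k <= 0 -> 0 < h <= hbar k -> 0 <= A -> 0 <= C -> 0 <= A - 2 * B + C ->
  (1 - 2 * k * h + k * h ^+ 2) * A + (2 * h - 2) * B + C <= 2 * (1 - k) * L * F ->
  2 * (1 - k) * L * F <= 2 * (1 - k) * h * A - ((1 - 2 * k * h + k * h ^+ 2) * A + (2 * k * h - 2) * B + C) ->
  0 < pfun h k /\ pfun h k * Num.min A C <= 2 * L * F.
Proof.
move=> L0 k0 hh A0 C0 ABC HS HU.
have [h2 hD2 hq] := @hbar_facts R k h k0 hh.
move: hh => /andP [h0 _].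
set m := Num.min A C.
have mA : m <= A by rewrite /m ge_min lexx.
have mC : m <= C by rewrite /m ge_min lexx orbT.
have m0 : 0 <= m by rewrite /m le_min A0 C0.
set T := 2 * (1 - k) * L * F.
move: HS HU; rewrite -/T => HS HU.
have k1 : 0 < 1 - k by lra.
rewrite /pfun; case: ifP => h1.
- have pE : 2 * h - h ^+ 2 * (- k / (1 - k)) = h * (2 - 2 * k + k * h) / (1 - k).
    by field; lra.
  rewrite pE.
  have p0 : 0 < h * (2 - 2 * k + k * h) by apply: mulr_gt0 => //; nra.
  split; first by apply: divr_gt0.
  set a := h * (1 - 2 * k + k * h).
  have a0 : 0 <= a by apply: mulr_ge0; nra.
  have am : a * m <= a * A by apply: ler_wpM2l.
  have bm : h * m <= h * C by apply: ler_wpM2l => //; lra.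
  have r0 : 0 <= (1 - h) * (A - 2 * B + C) by apply: mulr_ge0 => //; lra.
  have HT : h * (2 - 2 * k + k * h) * m <= T.
    have -> : h * (2 - 2 * k + k * h) * m = a * m + h * m by rewrite /a; ring.
    rewrite /a in am r0 *; lra.
  have -> : h * (2 - 2 * k + k * h) / (1 - k) * m = (h * (2 - 2 * k + k * h) * m) / (1 - k) by rewrite mulrAC.
  rewrite ler_pdivrMr //; rewrite /T in HT; lra.
- have h1' : 1 < h by rewrite ltNge h1.
  have D2 := hD2 h1'.
  have p0 : 0 < h * (2 - h) * (2 - k * h) by apply: mulr_gt0; [apply: mulr_gt0|]; nra.
  have D2E : 2 - (1 + k) * h = 2 - h - k * h by ring.
  rewrite D2E.
  split; first by apply: divr_gt0.
  set a := h * (1 - k) * (3 - 2 * (1 + k) * h + k * h ^+ 2).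
  have a0 : 0 <= a by apply: mulr_ge0 => //; apply: mulr_ge0; lra.
  have am : a * m <= a * A by apply: ler_wpM2l.
  have bm : h * (1 - k) * m <= h * (1 - k) * C by apply: ler_wpM2l => //; apply: mulr_ge0; lra.
  have K0 : 0 <= (h - 1) * ((2 * (1 - k) * h * A - ((1 - 2 * k * h + k * h ^+ 2) * A + (2 * k * h - 2) * B + C))
      - ((1 - 2 * k * h + k * h ^+ 2) * A + (2 * h - 2) * B + C)).
    apply: mulr_ge0; lra.
  have DS : (2 - h - k * h) * ((1 - 2 * k * h + k * h ^+ 2) * A + (2 * h - 2) * B + C) <= (2 - h - k * h) * T.
    by apply: ler_wpM2l => //; lra.
  have HT : h * (1 - k) * (2 - h) * (2 - k * h) * m <= (2 - h - k * h) * T.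
    have -> : h * (1 - k) * (2 - h) * (2 - k * h) * m = a * m + h * (1 - k) * m by rewrite /a; ring.
    rewrite /a in am K0 DS *; lra.
  have -> : h * (2 - h) * (2 - k * h) / (2 - h - k * h) * m = (h * (2 - h) * (2 - k * h) * m) / (2 - h - k * h) by rewrite mulrAC.
  rewrite ler_pdivrMr // -(ler_pM2l k1); rewrite /T in HT; lra.
Qed.

Lemma Zgen2 (R : realType) (d : nat) (x g g' : 'rV[R]_d) (p q r : R) :
  (x - p *: g) + ((p - r) *: g + q *: g') = x + ((- r) *: g + q *: g').
Proof. by apply/rowP => j; rewrite !mxE; ring. Qed.
Lemma Zgen1 (R : realType) (d : nat) (x g g' : 'rV[R]_d) (p q r : R) :
  x + ((- p + r) *: g + (- q) *: g') = (x - p *: g) + (r *: g + (- q) *: g').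
Proof. by apply/rowP => j; rewrite !mxE; ring. Qed.

Lemma FO' (R : realType) (d : nat) (f : 'rV[R]_d -> R) (s c : R) (y v : 'rV[R]_d) :
  differentiable f y ->
  (forall x w (t : R), 0 <= t <= 1 ->
     s * f (t *: x + (1 - t) *: w) - c / 2 * sqnorm (t *: x + (1 - t) *: w)
     <= t * (s * f x - c / 2 * sqnorm x) + (1 - t) * (s * f w - c / 2 * sqnorm w)) ->
  c / 2 * sqnorm v <= s * (f (y + v) - f y - dotv (grad f y) v).
Proof.
move=> df Hc; have := @FO R d f s c y (y + v) df Hc.
by rewrite addrC addKr.
Qed.

Lemma step (R : realType) (d : nat) (f : 'rV[R]_d -> R) (L mu h : R) (x x' : 'rV[R]_d) :
  0 < L -> mu <= 0 -> F_class mu L f -> 0 < h <= hbar (mu / L) ->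
  x' = x - (h / L) *: grad f x ->
  0 < pfun h (mu / L) /\
  pfun h (mu / L) * Num.min (sqnorm (grad f x)) (sqnorm (grad f x')) <= 2 * L * (f x - f x').
Proof.
move=> L0 mu0 [_ [_ [dif [c2 c1]]]] hh Ex'.
have FO1 : forall y v, mu / 2 * sqnorm v <= 1 * (f (y + v) - f y - dotv (grad f y) v).
  move=> y v; apply: FO' => // xx w t Ht.
  by move: (c1 xx w t Ht) => /= H; lra.
have FO2 : forall y v, (- L) / 2 * sqnorm v <= -1 * (f (y + v) - f y - dotv (grad f y) v).
  move=> y v; apply: FO' => // xx w t Ht.
  by move: (c2 xx w t Ht) => /= H; lra.
set g := grad f x in Ex' *.
set g' := grad f x'.
set k := mu / L.
set s := L - mu.
set r := s^-1 * (1 - k * h).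
have Ha := FO1 x' ((h / L - r) *: g + s^-1 *: g').
have Hb := FO2 x ((- r) *: g + s^-1 *: g').
have Hc := FO1 x ((- (h / L) + r) *: g + (- s^-1) *: g').
have Hd := FO2 x' (r *: g + (- s^-1) *: g').
have Z2 : x' + ((h / L - r) *: g + s^-1 *: g') = x + ((- r) *: g + s^-1 *: g').
  by rewrite Ex'; apply: Zgen2.
have Z1 : x + ((- (h / L) + r) *: g + (- s^-1) *: g') = x' + (r *: g + (- s^-1) *: g').
  by rewrite Ex'; apply: Zgen1.
rewrite Z2 in Ha; rewrite Z1 in Hc.
rewrite -/g -/g' in Ha Hb Hc Hd.
clearbody g g'.
move: Ha Hb Hc Hd; rewrite /sqnorm !dot_comb !dotvDr !dotvZr (dotvC g' g).
set A := dotv g g; set B := dotv g g'; set C := dotv g' g'.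
set fz2 := f (x + ((- r) *: g + s^-1 *: g')); set fz1 := f (x' + (r *: g + (- s^-1) *: g')).
move=> Ha Hb Hc Hd.
move: Ha; rewrite -subr_ge0 => Ha; move: Hb; rewrite -subr_ge0 => Hb.
move: Hc; rewrite -subr_ge0 => Hc; move: Hd; rewrite -subr_ge0 => Hd.
have k1 : 0 < 1 - k.
  rewrite /k; have : mu / L <= 0 by apply: mulr_le0_ge0 => //; rewrite invr_ge0 ltW.
  lra.
have L1 : 0 <= 2 * (1 - k) * L.
  by apply: mulr_ge0; [apply: mulr_ge0; lra | lra].
have s0 : L - mu != 0 by apply/negP => /eqP; lra.
have L0' : L != 0 by rewrite gt_eqF.
have Hab := mulr_ge0 L1 (addr_ge0 Ha Hb).
have Hcd := mulr_ge0 L1 (addr_ge0 Hc Hd).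
have HS : (1 - 2 * k * h + k * h ^+ 2) * A + (2 * h - 2) * B + C <= 2 * (1 - k) * L * (f x - f x').
  rewrite -subr_ge0.
  match type of Hab with is_true (0 <= ?P) => have -> : 2 * (1 - k) * L * (f x - f x') - ((1 - 2 * k * h + k * h ^+ 2) * A + (2 * h - 2) * B + C) = P end.
    by rewrite /r /s /k; field; rewrite s0 L0'.
  exact: Hab.
have HU : 2 * (1 - k) * L * (f x - f x') <= 2 * (1 - k) * h * A - ((1 - 2 * k * h + k * h ^+ 2) * A + (2 * k * h - 2) * B + C).
  rewrite -subr_ge0.
  match type of Hcd with is_true (0 <= ?P) => have -> : 2 * (1 - k) * h * A - ((1 - 2 * k * h + k * h ^+ 2) * A + (2 * k * h - 2) * B + C) - 2 * (1 - k) * L * (f x - f x') = P end.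
    by rewrite /r /s /k; field; rewrite s0 L0'.
  exact: Hcd.
have A0 : 0 <= A by exact: sqnorm_ge0.
have C0 : 0 <= C by exact: sqnorm_ge0.
have ABC : 0 <= A - 2 * B + C.
  have := sqnorm_ge0 (g - g'); rewrite /sqnorm dotvBl !dotvBr (dotvC g' g) -/A -/B -/C.
  lra.
have k0 : k <= 0 by rewrite /k; apply: mulr_le0_ge0 => //; rewrite invr_ge0 ltW.
exact: (@scalar_step R L k h A B C (f x - f x') L0 k0 hh A0 C0 ABC HS HU).
Qed.

Lemma bigmin_le_i (R : realType) (n : nat) (F : nat -> R) (x0 : R) (i : nat) :
  (i <= n)%N -> \big[Num.min/x0]_(j < n.+1) F j <= F i.
Proof.
move=> hi; have hi' : (i < n.+1)%N by [].
exact: (bigmin_le x0 (Ordinal hi') (fun j : 'I_n.+1 => F j)).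
Qed.

Lemma telesc (R : realType) (n : nat) (F : nat -> R) :
  \sum_(i < n) (F i - F i.+1) = F 0%N - F n.
Proof.
elim: n => [|n IH]; first by rewrite big_ord0 subrr.
by rewrite big_ord_recr /= IH addrA subrK.
Qed.

Theorem theorem4p2 (R : realType) (d : nat) (L mu : R) (f : 'rV[R]_d -> R)
  (N : nat) (h : nat -> R) (x : nat -> 'rV[R]_d) :
  0 < L -> mu <= 0 -> F_class mu L f ->
  (forall i, (i < N)%N -> 0 < h i <= hbar (mu / L)) ->
  (forall i, (i < N)%N -> x i.+1 = x i - (h i / L) *: grad f (x i)) ->
  ((0 < N)%N ->
     \big[Num.min/sqnorm (grad f (x 0%N))]_(i < N.+1) sqnorm (grad f (x i))
     <= 2 * L * (f (x 0%N) - f (x N))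
        / (\sum_(i < N) pfun (h i) (mu / L)))
  /\
  ((exists m : R, forall y, m <= f y) ->
     \big[Num.min/sqnorm (grad f (x 0%N))]_(i < N.+1) sqnorm (grad f (x i))
     <= 2 * L * (f (x 0%N) - inf (range f))
        / (1 + \sum_(i < N) pfun (h i) (mu / L))).
Proof.
move=> L0 mu0 Fc Hh Hx.
set M := \big[Num.min/_]_(i < N.+1) _.
have Mle : forall i, (i <= N)%N -> M <= sqnorm (grad f (x i)).
  by move=> i hi; apply: (@bigmin_le_i R N (fun j => sqnorm (grad f (x j)))).
have St : forall i, (i < N)%N -> 0 < pfun (h i) (mu / L) /\
    pfun (h i) (mu / L) * M <= 2 * L * (f (x i) - f (x i.+1)).
  move=> i hi.
  have [p0 pl] := @step R d f L mu (h i) (x i) (x i.+1) L0 mu0 Fc (Hh i hi) (Hx i hi).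
  split => //; apply: le_trans pl; apply: ler_wpM2l; first exact: ltW.
  rewrite le_min; apply/andP; split; apply: Mle; [exact: ltnW | exact: hi].
have Ssum : (\sum_(i < N) pfun (h i) (mu / L)) * M <= 2 * L * (f (x 0%N) - f (x N)).
  have Tl := @telesc R N (fun i => f (x i)); simpl in Tl.
  rewrite mulr_suml -Tl mulr_sumr.
  by apply: ler_sum => i _; have [_ ] := St i (ltn_ord i).
have Sp0 : 0 <= \sum_(i < N) pfun (h i) (mu / L).
  by apply: sumr_ge0 => i _; have [/ltW ] := St i (ltn_ord i).
split.
- move=> N0.
  have Sp : 0 < \sum_(i < N) pfun (h i) (mu / L).
    rewrite (bigD1 (Ordinal N0)) //=.
    have [p0 _] := St 0%N N0.
    have : 0 <= \sum_(i < N | i != Ordinal N0) pfun (h i) (mu / L).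
      by apply: sumr_ge0 => i _; have [/ltW ] := St i (ltn_ord i).
    lra.
  by rewrite ler_pdivlMr // mulrC.
- move=> [m Hm].
  case: Fc => _ [_ [dif [c2 c1]]].
  set gN := grad f (x N).
  have FO2 : forall y v, (- L) / 2 * sqnorm v <= -1 * (f (y + v) - f y - dotv (grad f y) v).
    move=> y v; apply: FO' => // xx w t Ht.
    by move: (c2 xx w t Ht) => /= H; lra.
  have Hd := FO2 (x N) ((- L^-1) *: gN).
  rewrite -/gN /sqnorm dotvZl !dotvZr -/(sqnorm gN) in Hd.
  have Hinf : inf (range f) <= f (x N + (- L^-1) *: gN).
    apply: ge_inf; last by exists (x N + (- L^-1) *: gN).
    by exists m => _ [y _ <-].
  have G0 : 0 <= sqnorm gN by exact: sqnorm_ge0.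
  have HN : sqnorm gN <= 2 * L * (f (x N) - inf (range f)).
    have E : - L / 2 * (- L^-1 * (- L^-1 * sqnorm gN)) = - (sqnorm gN / (2 * L)).
      by field; rewrite gt_eqF.
    have E2 : - L^-1 * sqnorm gN = - (sqnorm gN / L) by rewrite mulNr mulrC.
    rewrite E E2 in Hd.
    have : sqnorm gN / (2 * L) <= f (x N) - inf (range f) by lra.
    by rewrite ler_pdivrMr ?mulr_gt0 // mulrC.
  rewrite ler_pdivlMr; last by lra.
  have MN := Mle N (leqnn N).
  rewrite mulrDr mulr1.
  lra.
Qed.
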